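(* Let $H\in\mathbb R^{T\times d_L}$, $X\in\mathbb R^{|V|\times d_R}$, $P\in\mathbb R^{n_P}$ (Frobenius/Euclidean inner products), let $\tau_{R\to L},\tau_{L\to R}\ge0$ be arbitrary finite delays, and consider the closed principal system \[ \dot H(t)=A_L(H(t))+\mathcal K X(t-\tau_{R\to L}),\quad \dot X(t)=A_R(X(t))+\mathcal K^* H(t-\tau_{L\to R}),\quad \dot P(t)=A_P(P(t)), \] where $\mathcal K:\mathbb R^{|V|\times d_R}\to\mathbb R^{T\times d_L}$ is a fixed linear operator with adjoint $\mathcal K^*$ and $\|\mathcal K\|_{\mathrm{op}}\le\|\mathcal K\|_{\mathrm{HS}}\le C_{\mathcal K}$, and $A_L,A_R,A_P$ are Lipschitz maps (the instantaneous principal vector fields, e.g. $A_L(H)=-\Delta_{G_L}(Q_L)H+F_L(H)$ and $A_R(X)=-\Delta_{G_R}(W_R)X+F_R(X)$ with all auxiliary variables frozen) which are one-sided dissipative: \[ \langle A_L(u)-A_L(v),u-v\rangle\le-\mu_L\|u-v\|^2,\ \langle A_R(u)-A_R(v),u-v\rangle\le-\mu_R\|u-v\|^2,\ \langle A_P(u)-A_P(v),u-v\rangle\le-\mu_P\|u-v\|^2 \] with $\mu_L,\mu_R,\mu_P>0$. Assume the system evolves in a compact positively invariant set (of the form of a product of closed balls) and has an equilibrium $(H^*,X^*,P^* )$ there, and assume the small-gain condition $C_{\mathcal K}^2<\mu_L\mu_R$. Then the equilibrium $(H^*,X^*,P^* )$ is unique and globally asymptotically stable, for all finite delays. Moreover,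 with $\tilde\varphi=(\tilde\varphi_L,\tilde\varphi_R,\tilde\varphi_P)$ denoting a history centered at the equilibrium, the Lyapunov–Krasovskii functional \[ V(\tilde\varphi)=\tfrac12\|\tilde\varphi_L(0)\|^2+\tfrac12\|\tilde\varphi_R(0)\|^2+\tfrac12\|\tilde\varphi_P(0)\|^2+\tfrac{C_{\mathcal K}^2}{2\mu_L}\int_{-\tau_{R\to L}}^0\|\tilde\varphi_R(s)\|^2ds+\tfrac{C_{\mathcal K}^2}{2\mu_R}\int_{-\tau_{L\to R}}^0\|\tilde\varphi_L(s)\|^2ds \] satisfies along solutions \[ \dot V\le-\alpha_L\|\tilde H(t)\|^2-\alpha_R\|\tilde X(t)\|^2-\mu_P\|\tilde P(t)\|^2, \] where $\tilde H=H-H^*$, $\tilde X=X-X^*$, $\tilde P=P-P^*$, $\alpha_L=\mu_L/2-C_{\mathcal K}^2/(2\mu_R)>0$ and $\alpha_R=\mu_R/2-C_{\mathcal K}^2/(2\mu_L)>0$.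
   Context: $H$ is a symbolic field on a connected finite graph $G_L$ with node set $\{1,\dots,T\}$ and $X$ a geometric field on a connected finite graph $G_R$ with node set $V$; $\Delta_{G_L}(Q_L)$, $\Delta_{G_R}(W_R)$ are weighted graph Laplacians with edge weights frozen at equilibrium values, and $F_L,F_R$ reaction terms. The operator $\mathcal K$ is induced by a kernel $\mathcal K(\ell,i)\in\mathbb R^{d_L\times d_R}$ via $(\mathcal K X)_\ell=\sum_i\mathcal K(\ell,i)x_i$, with $\|\mathcal K\|_{\mathrm{HS}}^2=\sum_{\ell,i}\|\mathcal K(\ell,i)\|_F^2$. Globally asymptotically stable means Lyapunov stable and every solution with admissible initial history converges to the equilibrium as $t\to\infty$. *)

(* Defs.v *)
From HB Require Import structures.
From mathcomp Require Import all_boot all_order all_algebra.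
From mathcomp Require Import all_classical all_reals all_analysis.
Set Implicit Arguments. Unset Strict Implicit. Unset Printing Implicit Defensive.
Import Order.TTheory GRing.Theory Num.Theory.
Import numFieldNormedType.Exports.
Local Open Scope classical_set_scope.
Local Open Scope ring_scope.

Section Defs.
Variable R : realType.

Definition frob (m n : nat) (A B : 'M[R]_(m, n)) : R :=
  \sum_(i < m) \sum_(j < n) A i j * B i j.
Definition fnorm2 (m n : nat) (A : 'M[R]_(m, n)) : R := frob A A.
Definition fnorm (m n : nat) (A : 'M[R]_(m, n)) : R := Num.sqrt (fnorm2 A).

(* The coupling operator K induced by a kernel Kk(l,i) in R^{dL x dR}:
   (K X)_l = sum_i Kk(l,i) x_i, x_i the i-th row of X (rows of K X are the
   vectors (K X)_l).  Its adjoint w.r.t. the Frobenius inner products: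
   (K^* H)_i = sum_l Kk(l,i)^T h_l. *)
Definition Kop (T dL nV dR : nat) (Kk : 'I_T -> 'I_nV -> 'M[R]_(dL, dR))
  (X : 'M[R]_(nV, dR)) : 'M[R]_(T, dL) :=
  \matrix_(l < T, a < dL) \sum_(i < nV) \sum_(b < dR) Kk l i a b * X i b.
Definition Kadj (T dL nV dR : nat) (Kk : 'I_T -> 'I_nV -> 'M[R]_(dL, dR))
  (H : 'M[R]_(T, dL)) : 'M[R]_(nV, dR) :=
  \matrix_(i < nV, b < dR) \sum_(l < T) \sum_(a < dL) Kk l i a b * H l a.
Definition HSnorm (T dL nV dR : nat) (Kk : 'I_T -> 'I_nV -> 'M[R]_(dL, dR)) : R :=
  Num.sqrt (\sum_(l < T) \sum_(i < nV) fnorm2 (Kk l i)).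

Definition lipschitz_map (m n : nat) (A : 'M[R]_(m, n) -> 'M[R]_(m, n)) : Prop :=
  exists Lc : R, forall u v, fnorm (A u - A v) <= Lc * fnorm (u - v).
Definition one_sided_dissipative (m n : nat) (A : 'M[R]_(m, n) -> 'M[R]_(m, n))
  (mu : R) : Prop :=
  forall u v, frob (A u - A v) (u - v) <= - mu * fnorm2 (u - v).

(* Classical solution of the delayed system on [-tau, +oo), tau = max delay:
   continuous on [-tau, +oo) (the restriction to [-tau,0] is the initial
   history), differentiable on (0, +oo) and satisfying the equations there. *)
Definition is_solution (T dL nV dR nP : nat)
  (AL : 'M[R]_(T, dL) -> 'M[R]_(T, dL)) (AR : 'M[R]_(nV, dR) -> 'M[R]_(nV, dR))
  (AP : 'cV[R]_nP -> 'cV[R]_nP) (Kk : 'I_T -> 'I_nV -> 'M[R]_(dL, dR))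
  (tauRL tauLR : R)
  (H : R -> 'M[R]_(T, dL)) (X : R -> 'M[R]_(nV, dR)) (P : R -> 'cV[R]_nP) : Prop :=
  let tau := Num.max tauRL tauLR in
  [/\ {within [set t | - tau <= t], continuous H},
      {within [set t | - tau <= t], continuous X},
      {within [set t | - tau <= t], continuous P} &
      forall t : R, 0 < t ->
        [/\ is_derive t (1 : R) H (AL (H t) + Kop Kk (X (t - tauRL))),
            is_derive t (1 : R) X (AR (X t) + Kadj Kk (H (t - tauLR))) &
            is_derive t (1 : R) P (AP (P t))]].

Definition dist3 (T dL nV dR nP : nat) (H Hs : 'M[R]_(T, dL))
  (X Xs : 'M[R]_(nV, dR)) (P Ps : 'cV[R]_nP) : R :=
  Num.sqrt (fnorm2 (H - Hs) + fnorm2 (X - Xs) + fnorm2 (P - Ps)).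

Definition in_balls (T dL nV dR nP : nat)
  (cL : 'M[R]_(T, dL)) (rL : R) (cR : 'M[R]_(nV, dR)) (rR : R)
  (cP : 'cV[R]_nP) (rP : R) H X P : Prop :=
  [/\ fnorm (H - cL) <= rL, fnorm (X - cR) <= rR & fnorm (P - cP) <= rP].

Definition LKfun (T dL nV dR nP : nat) (CK muL muR tauRL tauLR : R)
  (phL : R -> 'M[R]_(T, dL)) (phR : R -> 'M[R]_(nV, dR)) (phP : R -> 'cV[R]_nP) : R :=
  2^-1 * fnorm2 (phL 0) + 2^-1 * fnorm2 (phR 0) + 2^-1 * fnorm2 (phP 0)
  + CK ^+ 2 / (2 * muL) *
      Rintegral (@lebesgue_measure R) `[- tauRL, 0]%classic (fun s => fnorm2 (phR s))
  + CK ^+ 2 / (2 * muR) *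
      Rintegral (@lebesgue_measure R) `[- tauLR, 0]%classic (fun s => fnorm2 (phL s)).

End Defs.

(* Main.v *)
Require Import Defs.
From HB Require Import structures.
From mathcomp Require Import all_boot all_order all_algebra.
From mathcomp Require Import all_classical all_reals all_analysis.
From mathcomp Require Import ring lra.
Import Order.TTheory GRing.Theory Num.Theory.
Import numFieldNormedType.Exports.
Local Open Scope classical_set_scope.
Local Open Scope ring_scope.
Set Implicit Arguments. Unset Strict Implicit. Unset Printing Implicit Defensive.
Section Alg.
Variable R : realType.

Lemma frobC m n (A B : 'M[R]_(m, n)) : frob A B = frob B A.
Proof. by rewrite /frob; apply: eq_bigr => i _; apply: eq_bigr => j _; rewrite mulrC. Qed.

Lemma fnorm2_ge0 m n (A : 'M[R]_(m, n)) : 0 <= fnorm2 A.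
Proof. by rewrite /fnorm2 /frob; apply: sumr_ge0 => i _; apply: sumr_ge0 => j _; rewrite -expr2 sqr_ge0. Qed.

Lemma young_real (c a b : R) : 0 < c -> a * b <= (2 * c)^-1 * (a * a) + c / 2 * (b * b).
Proof.
move=> c0.
have h : (2 * c)^-1 * (a * a) + c / 2 * (b * b) - a * b = (2 * c)^-1 * ((a - c * b) ^+ 2).
  by field; rewrite gt_eqF.
rewrite -subr_ge0 h; apply: mulr_ge0; last exact: sqr_ge0.
by rewrite invr_ge0 mulr_ge0 // ltW.
Qed.

Lemma frob_young m n (A B : 'M[R]_(m, n)) (c : R) : 0 < c ->
  frob A B <= (2 * c)^-1 * fnorm2 A + c / 2 * fnorm2 B.
Proof.
move=> c0; rewrite /fnorm2 /frob !mulr_sumr -big_split /=; apply: ler_sum => i _.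
rewrite !mulr_sumr -big_split /=; apply: ler_sum => j _; exact: young_real.
Qed.

Lemma frob_lower m n (A B : 'M[R]_(m, n)) :
  - (fnorm2 A + fnorm2 B) <= 2 * frob A B.
Proof.
rewrite /fnorm2 /frob -big_split /= mulr_sumr -sumrN; apply: ler_sum => i _.
rewrite -big_split /= mulr_sumr -sumrN; apply: ler_sum => j _.
have := sqr_ge0 (A i j + B i j); rewrite expr2; nra.
Qed.

Lemma fnorm2D_le m n (A B : 'M[R]_(m, n)) :
  fnorm2 (A + B) <= 2 * fnorm2 A + 2 * fnorm2 B.
Proof.
rewrite /fnorm2 /frob !mulr_sumr -big_split /=; apply: ler_sum => i _.
rewrite !mulr_sumr -big_split /=; apply: ler_sum => j _; rewrite !mxE.
have := sqr_ge0 (A i j - B i j); rewrite expr2; nra.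
Qed.

Lemma fnorm2N m n (A : 'M[R]_(m, n)) : fnorm2 (- A) = fnorm2 A.
Proof. by rewrite /fnorm2 /frob; apply: eq_bigr => i _; apply: eq_bigr => j _; rewrite mxE mulrNN. Qed.

Lemma fnorm2_eq0 m n (A : 'M[R]_(m, n)) : fnorm2 A = 0 -> A = 0.
Proof.
rewrite /fnorm2 /frob => /eqP; rewrite psumr_eq0; last first.
  by move=> i _; apply: sumr_ge0 => j _; rewrite -expr2 sqr_ge0.
move=> /allP h; apply/matrixP => i j; rewrite mxE.
have /implyP := h i (mem_index_enum _) => /(_ isT) /eqP /eqP.
rewrite psumr_eq0; last by move=> k _; rewrite -expr2 sqr_ge0.
move=> /allP /(_ j (mem_index_enum _)) /implyP /(_ isT).
by rewrite mulf_eq0 orbb => /eqP.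
Qed.

Lemma fnorm_le_sq m n (A : 'M[R]_(m, n)) r : fnorm A <= r -> fnorm2 A <= r ^+ 2.
Proof.
rewrite /fnorm => h.
have h0 : 0 <= Num.sqrt (fnorm2 A) by apply: sqrtr_ge0.
rewrite -(sqr_sqrtr (fnorm2_ge0 A)); rewrite ler_sqr ?nnegrE //; exact: le_trans h0 h.
Qed.

Lemma lip_sq m n (F : 'M[R]_(m, n) -> 'M[R]_(m, n)) :
  lipschitz_map F -> exists L : R, 0 <= L /\ forall u v, fnorm2 (F u - F v) <= L * fnorm2 (u - v).
Proof.
move=> [Lc hL]; exists (Lc ^+ 2); split; first exact: sqr_ge0.
move=> u v; have := hL u v; rewrite /fnorm => h.
have h0 : 0 <= Num.sqrt (fnorm2 (F u - F v)) by apply: sqrtr_ge0.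
have h1 : 0 <= Lc * Num.sqrt (fnorm2 (u - v)) by exact: le_trans h0 h.
rewrite -(sqr_sqrtr (fnorm2_ge0 (F u - F v))) -[X in _ * X](sqr_sqrtr (fnorm2_ge0 (u - v))).
by rewrite -exprMn ler_sqr ?nnegrE.
Qed.

Lemma ball_bound m n (H c Hs : 'M[R]_(m, n)) r :
  fnorm (H - c) <= r -> fnorm (Hs - c) <= r -> fnorm2 (H - Hs) <= 4 * r ^+ 2.
Proof.
move=> /fnorm_le_sq h1 /fnorm_le_sq h2.
have -> : H - Hs = (H - c) + - (Hs - c) by rewrite opprB addrA subrK.
apply: le_trans (fnorm2D_le _ _) _; rewrite fnorm2N; lra.
Qed.

End Alg.
Section Alg2.
Variable R : realType.

Lemma eqle (x y : R) : x = y -> x <= y. Proof. by move=> ->. Qed.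

Lemma cs_real (A B C : R) : (forall l, 2 * l * C <= l ^+ 2 * A + B) -> 0 <= A ->
  C ^+ 2 <= A * B.
Proof.
move=> h A0; have B0 : 0 <= B by have := h 0; rewrite expr2 !mulr0 !mul0r add0r.
case: (ltP 0 A) => [Ap|Ale].
  have := h (C / A).
  have -> : 2 * (C / A) * C = 2 * (C ^+ 2 / A) by rewrite expr2; field; rewrite gt_eqF.
  have -> : (C / A) ^+ 2 * A = C ^+ 2 / A by rewrite expr2; field; rewrite gt_eqF.
  move=> h2; have h3 : C ^+ 2 / A <= B by lra.
  by rewrite -ler_pdivrMl // mulrC.
have A00 : A = 0 by apply/eqP; rewrite eq_le Ale A0.
rewrite A00 mul0r; case: (eqVneq C 0) => [->|Cn0]; first by rewrite expr0n.
have := h ((B + 1) / (2 * C)).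
have -> : 2 * ((B + 1) / (2 * C)) * C = B + 1 by field; rewrite Cn0.
rewrite A00 mulr0 add0r; lra.
Qed.

Lemma cs2 n m (u v : 'I_n -> 'I_m -> R) :
  (\sum_i \sum_j u i j * v i j) ^+ 2 <=
  (\sum_i \sum_j u i j ^+ 2) * (\sum_i \sum_j v i j ^+ 2).
Proof.
apply: cs_real; last by apply: sumr_ge0 => i _; apply: sumr_ge0 => j _; exact: sqr_ge0.
move=> l; rewrite !mulr_sumr -big_split /=; apply: ler_sum => i _.
rewrite !mulr_sumr -big_split /=; apply: ler_sum => j _.
have := sqr_ge0 (l * u i j - v i j); rewrite !expr2; nra.
Qed.

Variables (T dL nV dR : nat) (Kk : 'I_T -> 'I_nV -> 'M[R]_(dL, dR)).

Definition HS2 := \sum_(l < T) \sum_(i < nV) fnorm2 (Kk l i).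

Lemma HS2_ge0 : 0 <= HS2.
Proof. by apply: sumr_ge0 => l _; apply: sumr_ge0 => i _; exact: fnorm2_ge0. Qed.

Lemma HS2_le CK : HSnorm Kk <= CK -> HS2 <= CK ^+ 2.
Proof.
rewrite /HSnorm => h.
have h0 : 0 <= Num.sqrt HS2 by apply: sqrtr_ge0.
rewrite -(sqr_sqrtr HS2_ge0) ler_sqr ?nnegrE //; exact: le_trans h0 h.
Qed.

Lemma KopB (A B : 'M[R]_(nV, dR)) : Kop Kk (A - B) = Kop Kk A - Kop Kk B.
Proof.
apply/matrixP => l a; rewrite !mxE -sumrB; apply: eq_bigr => i _.
rewrite -sumrB; apply: eq_bigr => b _; by rewrite !mxE mulrBr.
Qed.

Lemma KadjB (A B : 'M[R]_(T, dL)) : Kadj Kk (A - B) = Kadj Kk A - Kadj Kk B.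
Proof.
apply/matrixP => l a; rewrite !mxE -sumrB; apply: eq_bigr => i _.
rewrite -sumrB; apply: eq_bigr => b _; by rewrite !mxE mulrBr.
Qed.

Lemma Kop_bound (X : 'M[R]_(nV, dR)) : fnorm2 (Kop Kk X) <= HS2 * fnorm2 X.
Proof.
rewrite /fnorm2 /frob /HS2 mulr_suml; apply: ler_sum => l _.
under eq_bigr do rewrite /fnorm2 /frob.
rewrite exchange_big /= mulr_suml; apply: ler_sum => a _.
rewrite mxE -expr2.
apply: le_trans (cs2 _ _) _.
apply: eqle; congr (_ * _); apply: eq_bigr => i _; apply: eq_bigr => j _; by rewrite expr2.
Qed.


Lemma Kadj_bound (H : 'M[R]_(T, dL)) : fnorm2 (Kadj Kk H) <= HS2 * fnorm2 H.
Proof.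
have -> : HS2 = \sum_(i < nV) \sum_(b < dR) \sum_(l < T) \sum_(a < dL) Kk l i a b ^+ 2.
  rewrite /HS2 exchange_big /=; apply: eq_bigr => i _.
  rewrite [RHS]exchange_big /=; apply: eq_bigr => l _.
  rewrite /fnorm2 /frob [RHS]exchange_big /=.
  by apply: eq_bigr => a _; apply: eq_bigr => b _; rewrite expr2.
rewrite /fnorm2 /frob mulr_suml; apply: ler_sum => i _.
rewrite mulr_suml; apply: ler_sum => b _.
rewrite mxE -expr2.
apply: le_trans (cs2 _ _) _.
apply: eqle; congr (_ * _); apply: eq_bigr => l _; apply: eq_bigr => a _; by rewrite expr2.
Qed.

End Alg2.
Section Calc.
Variable R : realType.

Lemma is_derive_entry m n (F : R -> 'M[R]_(m, n)) (t : R) D i j :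
  is_derive t (1 : R) F D -> is_derive t (1 : R) (fun r => F r i j) (D i j).
Proof.
move=> [dF <-].
set q := (fun h : R => h^-1 *: ((F \o shift t) (h *: (1:R)) - F t)).
have cq : q @ (0:R)^' --> 'D_1 F t := dF.
have ce : (fun h => q h i j) @ (0:R)^' --> ('D_1 F t) i j.
  exact: (cvg_comp _ _ cq (@coord_continuous R m n i j _)).
have e : (fun h : R => h^-1 *: (((fun r => F r i j) \o shift t) (h *: (1:R)) - F t i j)) =
         (fun h => q h i j).
  by apply/funext => h; rewrite /q /= !mxE.
apply: DeriveDef.
  by rewrite /derivable e; apply/cvg_ex; exists (('D_1 F t) i j).
by rewrite /derive e; apply: cvg_lim.
Qed.


Lemma is_derive_sumf n (f : 'I_n -> R -> R) (df : 'I_n -> R) (t : R) :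
  (forall i, is_derive t (1:R) (f i) (df i)) ->
  is_derive t (1:R) (fun r => \sum_(i < n) f i r) (\sum_(i < n) df i).
Proof. by move=> h; have := is_derive_sum h; rewrite fct_sumE. Qed.

Lemma is_derive_mulf (f g : R -> R) (t df dg : R) :
  is_derive t (1:R) f df -> is_derive t (1:R) g dg ->
  is_derive t (1:R) (fun r => f r * g r) (df * g t + f t * dg).
Proof.
move=> hf hg; have := is_deriveM hf hg => h.
by apply: is_derive_eq; rewrite /GRing.scale /= addrC mulrC.
Qed.

Lemma is_derive_frob m n (F G : R -> 'M[R]_(m, n)) (t : R) dF dG :
  is_derive t (1:R) F dF -> is_derive t (1:R) G dG ->
  is_derive t (1:R) (fun r => frob (F r) (G r)) (frob dF (G t) + frob (F t) dG).
Proof.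
move=> hF hG; rewrite /frob -big_split /=.
apply: is_derive_sumf => i; rewrite -big_split /=.
apply: is_derive_sumf => j.
exact: is_derive_mulf (is_derive_entry i j hF) (is_derive_entry i j hG).
Qed.

Lemma is_derive_subc m n (F : R -> 'M[R]_(m, n)) (C : 'M[R]_(m, n)) (t : R) dF :
  is_derive t (1:R) F dF -> is_derive t (1:R) (fun r => F r - C) dF.
Proof.
move=> hF; have := is_deriveB hF (is_derive_cst C t 1).
by rewrite subr0.
Qed.

Lemma is_derive_fnorm2 m n (F : R -> 'M[R]_(m, n)) (C : 'M[R]_(m, n)) (t : R) dF :
  is_derive t (1:R) F dF ->
  is_derive t (1:R) (fun r => fnorm2 (F r - C)) (2 * frob dF (F t - C)).
Proof.
move=> hF; have h := is_derive_subc C hF.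
have := is_derive_frob h h; rewrite /fnorm2 => h2.
by apply: is_derive_eq; rewrite [frob (F t - C) dF]frobC mulr2n mulrDl mul1r.
Qed.

End Calc.
Section Cont.
Variable R : realType.

Lemma cvg_sum_fil {T : Type} (F : set_system T) {FF : Filter F} n
  (f : 'I_n -> T -> R) (l : 'I_n -> R) :
  (forall i, f i x @[x --> F] --> l i) ->
  \sum_(i < n) f i x @[x --> F] --> \sum_(i < n) l i.
Proof.
elim: n f l => [|n IH] f l h.
  rewrite big_ord0; under eq_cvg do rewrite big_ord0; exact: cvg_cst.
rewrite big_ord_recr /=; under eq_cvg do rewrite big_ord_recr /=.
apply: cvgD; last exact: h.
exact: (IH (fun i => f (widen_ord (leqnSn n) i)) (fun i => l (widen_ord (leqnSn n) i))).
Qed.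

Lemma fnorm2B_continuous m n (C : 'M[R]_(m, n)) :
  continuous (fun M : 'M[R]_(m, n) => fnorm2 (M - C)).
Proof.
move=> M; rewrite /fnorm2 /frob.
apply: (@cvg_sum_fil _ (nbhs M)) => i; apply: (@cvg_sum_fil _ (nbhs M)) => j.
have hc : (fun N : 'M[R]_(m, n) => (N - C) i j) @ M --> (M - C) i j.
  have -> : (fun N : 'M[R]_(m, n) => (N - C) i j) = (fun N => N i j - C i j).
    by rewrite funeqE => N; rewrite !mxE.
  rewrite !mxE; apply: (@cvgB _ _ _ (nbhs M)); last exact: cvg_cst.
  exact: (@coord_continuous R m n i j M).
exact: (@cvgM _ _ (nbhs M) _ _ _ _ _ hc hc).
Qed.

Lemma within_fnorm2 m n (F : R -> 'M[R]_(m, n)) (C : 'M[R]_(m, n)) (A : set R) :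
  {within A, continuous F} -> {within A, continuous (fun s => fnorm2 (F s - C))}.
Proof.
move=> hF x.
exact: (@continuous_comp (subspace A) _ _ F (fun M => fnorm2 (M - C)) x (hF x) (@fnorm2B_continuous m n C (F x))).
Qed.

Lemma interior_cont {U : topologicalType} (f : R -> U) (a x : R) :
  {within [set t | a <= t], continuous f} -> a < x -> {for x, continuous f}.
Proof.
move=> hf ax.
have hi : [set t | a <= t]° x.
  rewrite /interior /=; exact: lt_le_nbhsr ax.
have := hf x; rewrite /continuous_at.
by rewrite -(nbhs_subspace_interior hi).
Qed.

End Cont.
Section Integ.
Variable R : realType.
Notation mu := (@lebesgue_measure R).

Lemma is_derive_shiftr (r x : R) : is_derive x (1:R) (fun s : R => r + s) 1.
Proof.
have := is_deriveD (is_derive_cst r x 1) (is_derive_id x (1:R)).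
by rewrite add0r.
Qed.

Lemma derive1_shiftr (r : R) : ((fun s : R => r + s)^`())%classic = cst 1.
Proof. by rewrite funeqE => x; rewrite derive1E; case: (is_derive_shiftr r x) => _ ->. Qed.

Lemma continuous_shiftr (r : R) : continuous (fun s : R => r + s).
Proof. by move=> x; apply: cvgD; [exact: cvg_cst | exact: cvg_id]. Qed.

Lemma int_shift (g : R -> R) (a b r : R) : 0 <= b -> a <= r - b ->
  {within [set t | a <= t], continuous g} ->
  \int[mu]_(s in `[-b, 0]) g (r + s) = \int[mu]_(x in `[r - b, r]) g x.
Proof.
move=> b0 arb gc.
have hb : -b <= 0 by rewrite oppr_le0.
have := @integration_by_substitution_increasing R (fun s => r + s) g (-b) 0 hb.
rewrite derive1_shiftr addr0.
move=> h; rewrite /Rintegral h //.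
- congr fine; apply: eq_integral => x _.
  by rewrite /= mulr1.
- by move=> x y _ _ xy; rewrite ltrD2l.
- by move=> x _; exact: cvg_cst.
- exact: is_cvg_cst.
- exact: is_cvg_cst.
- split.
  + by move=> x _; exact: (@ex_derive _ _ _ _ _ _ _ (is_derive_shiftr r x)).
  + by apply: cvg_at_right_filter; apply: continuous_shiftr.
  + by apply: cvg_at_left_filter; apply: continuous_shiftr.
- apply: continuous_subspaceW gc => x /=; rewrite in_itv /= => /andP [hx _].
  exact: le_trans arb hx.
Qed.

End Integ.
Section Integ2.
Variable R : realType.
Notation mu := (@lebesgue_measure R).

Lemma is_derive_shiftB (f : R -> R) (x b d : R) :
  is_derive (x - b) (1:R) f d -> is_derive x (1:R) (fun r => f (r - b)) d.
Proof.
move=> [df <-].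
have e : (fun h : R => h^-1 *: (((fun r => f (r - b)) \o shift x) (h *: (1:R)) - f (x - b))) =
         (fun h : R => h^-1 *: ((f \o shift (x - b)) (h *: (1:R)) - f (x - b))).
  by rewrite funeqE => h /=; rewrite addrA.
apply: DeriveDef; first by rewrite /derivable e.
by rewrite /derive e.
Qed.

Lemma int_integrable (g : R -> R) (a x y : R) : a <= x ->
  {within [set t | a <= t], continuous g} -> mu.-integrable `[x, y] (EFin \o g).
Proof.
move=> ax gc; apply: continuous_compact_integrable; first exact: segment_compact.
apply: continuous_subspaceW gc => z /=; rewrite in_itv /= => /andP [hz _].
exact: le_trans ax hz.
Qed.

Lemma is_derive_G (g : R -> R) (a x : R) :
  {within [set t | a <= t], continuous g} -> a < x ->
  is_derive x (1:R) (fun y => \int[mu]_(s in `[a, y]) g s) (g x).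
Proof.
move=> gc ax.
have := @continuous_FTC1_closed R g a x (x + 1) _ _ ax _.
case.
- by rewrite ltrDl.
- apply: (@int_integrable g a) => //.
- exact: (interior_cont gc ax).
move=> hd hv; apply: DeriveDef => //.
by rewrite -derive1E hv.
Qed.

Lemma int_deriv (g : R -> R) (a b t0 : R) : 0 <= b -> a < t0 - b ->
  {within [set t | a <= t], continuous g} ->
  is_derive t0 (1:R) (fun r => \int[mu]_(s in `[-b, 0]) g (r + s)) (g t0 - g (t0 - b)).
Proof.
move=> b0 atb gc.
set G := (fun y => \int[mu]_(s in `[a, y]) g s).
have hG : is_derive t0 (1:R) (fun r => G r - G (r - b)) (g t0 - g (t0 - b)).
  apply: is_deriveB.
    apply: is_derive_G gc _; apply: lt_le_trans atb _; rewrite lerBlDr lerDl //.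
  by apply: is_derive_shiftB; apply: is_derive_G gc atb.
apply: near_eq_is_derive hG.
have : a + b < t0 by rewrite -ltrBrDr.
move=> /lt_le_nbhsr; apply: filterS => r abr.
have arb : a <= r - b by rewrite lerBrDr.
rewrite (int_shift (a := a)) //.
rewrite /G Rintegral_itvB //.
- rewrite Rintegral_itv_obnd_cbnd //.
  apply: integrableS (int_integrable r arb gc) => //.
  by apply: subset_itvScc; rewrite bnd_simp.
- exact: int_integrable (lexx _) gc.
- by rewrite bnd_simp lerBlDr lerDl.
Qed.

End Integ2.
Section Integ3.
Variable R : realType.
Notation mu := (@lebesgue_measure R).

Lemma int_bound (g : R -> R) (a b r M : R) : 0 <= b -> a <= r - b ->
  {within [set t | a <= t], continuous g} ->
  (forall y, r - b <= y -> y <= r -> g y <= M) ->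
  \int[mu]_(s in `[-b, 0]) g (r + s) <= b * M.
Proof.
move=> b0 arb gc hM.
rewrite (int_shift (a := a)) //.
have hc : mu.-integrable `[r - b, r] (EFin \o (fun _ : R => M)).
  apply: continuous_compact_integrable; first exact: segment_compact.
  by apply: continuous_subspaceT => x; exact: cvg_cst.
apply: le_trans (@le_Rintegral _ _ R mu _ g (fun _ => M) _ (int_integrable r arb gc) hc _) _ => //.
  move=> y /=; rewrite in_itv /= => /andP [h1 h2]; exact: hM.
rewrite Rintegral_cst //.
have := @lebesgue_measure_itv R `[r - b, r]%R. move=> h.
change (M * fine (mu `[r - b, r]%classic) <= b * M). rewrite h /=.
have [bp|bn] := ltP 0 b.
  rewrite ifT; last by rewrite lte_fin ltrBlDr ltrDl.
  by rewrite -EFinD /= opprB addrC subrK mulrC.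
have -> : b = 0 by apply/eqP; rewrite eq_le bn b0.
by rewrite subr0 ltxx /= mulr0 mul0r.
Qed.

Lemma int_ge0 (g : R -> R) (D : set R) : (forall y, 0 <= g y) ->
  0 <= \int[mu]_(s in D) g s.
Proof. by move=> h; apply: Rintegral_ge0 => y _; exact: h. Qed.

End Integ3.
Section Barb.
Variable R : realType.

Lemma mvt_pos (f : R -> R) (Pd : R -> R -> Prop) (a b : R) : 0 < a -> a < b ->
  (forall r : R, 0 < r -> exists2 dV : R, is_derive r (1:R) f dV & Pd r dV) ->
  exists2 c, a < c < b & exists2 dV, Pd c dV & f b - f a = dV * (b - a).
Proof.
move=> a0 ab h.
have hd : forall r : R, 0 < r -> is_derive r (1:R) f ('D_1 f r) /\ Pd r ('D_1 f r).
  move=> r r0; have [dV [dfr dv] P] := h r r0.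
  by rewrite dv; split => //; apply: DeriveDef.
have H1 : forall x, x \in `]a, b[%R -> is_derive x (1:R) f ('D_1 f x).
  move=> x; rewrite in_itv /= => /andP [h1 _]; apply: (hd x _).1; exact: lt_trans a0 h1.
have H2 : {within `[a, b], continuous f}.
  apply: derivable_within_continuous => x; rewrite in_itv /= => /andP [h1 _].
  have x0 : 0 < x by exact: lt_le_trans a0 h1.
  by have [d [dd _] _] := h x x0.
have [c cab e] := @MVT R f (fun r => 'D_1 f r) a b ab H1 H2.
exists c; first by move: cab; rewrite in_itv /=.
exists ('D_1 f c) => //; apply: (hd c _).2.
by move: cab; rewrite in_itv /= => /andP [h1 _]; exact: lt_trans a0 h1.
Qed.

Variables (V D : R -> R) (al L : R).
Hypothesis al0 : 0 < al.
Hypothesis L0 : 0 < L.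
Hypothesis HV : forall r : R, 0 < r -> exists2 dV : R, is_derive r (1:R) V dV & dV <= - al * D r.
Hypothesis HD : forall r : R, 0 < r -> exists2 dD : R, is_derive r (1:R) D dD & - L <= dD.
Hypothesis D0 : forall r : R, 0 < r -> 0 <= D r.
Hypothesis V0 : forall r : R, 0 < r -> 0 <= V r.

Lemma V_rate (a b c : R) : 0 < a -> a <= b -> (forall s, a <= s -> s <= b -> c <= D s) ->
  V b - V a <= - (al * c) * (b - a).
Proof.
move=> a0; rewrite le_eqVlt => /predU1P [<- _|ab hc]; first by rewrite !subrr mulr0.
have [x /andP [ax xb] [dV hdV ->]] := mvt_pos a0 ab HV.
have cx : c <= D x by apply: hc; apply: ltW.
have acx : al * c <= al * D x by rewrite ler_pM2l.
have ba : 0 < b - a by rewrite subr_gt0.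
have h1 : dV * (b - a) <= (- al * D x) * (b - a) by rewrite ler_pM2r.
have h2 : (- al * D x) * (b - a) <= - (al * c) * (b - a) by rewrite ler_pM2r // mulNr lerN2.
exact: le_trans h1 h2.
Qed.

Lemma V_mono (a b : R) : 0 < a -> a <= b -> V b <= V a.
Proof.
move=> a0 ab; have := @V_rate a b 0 a0 ab.
rewrite mulr0 oppr0 mul0r subr_le0; apply => s h1 h2; apply: D0.
exact: lt_le_trans a0 h1.
Qed.

Lemma D_lower (a b : R) : 0 < a -> a <= b -> D a - L * (b - a) <= D b.
Proof.
move=> a0; rewrite le_eqVlt => /predU1P [<-|ab]; first by rewrite subrr mulr0 subr0.
have [x /andP [ax xb] [dD hdD e]] := mvt_pos a0 ab HD.
have : 0 < b - a by rewrite subr_gt0.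
nra.
Qed.

Lemma barbalat (e : R) : 0 < e -> \forall t \near +oo, D t < e.
Proof.
move=> e0.
set S := [set y | exists2 r, 0 < r & V r = y].
have hS : has_inf S.
  split; first by exists (V 1); exists 1.
  by exists 0 => y [r r0 <-]; exact: V0.
set m := inf S.
set w := e / (2 * L).
have w0 : 0 < w by rewrite divr_gt0 // mulr_gt0.
set dl := al * (e / 2) * w.
have e20 : 0 < e / 2 by rewrite divr_gt0.
have dl0 : 0 < dl by rewrite /dl; apply: mulr_gt0 => //; apply: mulr_gt0.
have [y yS hy] := @inf_adherent R S dl dl0 hS.
have [T0 T00 eT] := yS. rewrite -eT in hy.
exists T0; split; first exact: num_real.
move=> t tT0; rewrite ltNge; apply/negP => Det.
have t0 : 0 < t by exact: lt_trans T00 tT0.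
have hc : forall s, t <= s -> s <= t + w -> e / 2 <= D s.
  move=> s ts sw; have := D_lower t0 ts.
  have stw : s - t <= w by lra.
  have : L * (s - t) <= L * w by rewrite ler_pM2l.
  have : L * w = e / 2 by rewrite /w; field; rewrite gt_eqF.
  lra.
have tw : t <= t + w by rewrite lerDl ltW.
have r1 := @V_rate t (t + w) (e / 2) t0 tw hc.
have r2 := @V_mono T0 t T00 (ltW tT0).
have r3 : m <= V (t + w).
  apply: ge_inf; first by case: hS.
  exists (t + w) => //; exact: addr_gt0.
have : (t + w) - t = w by rewrite addrC addKr.
move=> ew; rewrite ew in r1.
rewrite /dl in hy; lra.
Qed.

End Barb.
Section Misc.
Variable R : realType.

Lemma cont_ext (D : R -> R) (a c : R) : a <= 0 ->
  {within [set s | a <= s], continuous D} -> D 0 < c ->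
  exists2 e : R, 0 < e & forall s, 0 <= s -> s < e -> D s < c.
Proof.
move=> a0 hD Dc.
have /subspace_continuousP h := hD.
have := h 0 a0 _ (lt_nbhsl Dc).
move=> /nbhs_ballP [e e0 he].
exists e => // s s0 se.
apply: (he s) => /=; last exact: le_trans a0 s0.
by rewrite /ball /= sub0r normrN ger0_norm.
Qed.

Lemma sqrt_lt_sq (x d : R) : 0 <= x -> 0 < d -> Num.sqrt x < d -> x < d ^+ 2.
Proof.
move=> x0 d0 h; rewrite -(sqr_sqrtr x0) ltr_sqr ?nnegrE // ?sqrtr_ge0 //.
exact: ltW.
Qed.

Lemma sq_lt_sqrt (x d : R) : 0 <= x -> 0 < d -> x < d ^+ 2 -> Num.sqrt x < d.
Proof.
move=> x0 d0 h; rewrite -(sqr_sqrtr x0) ltr_sqr ?nnegrE ?sqrtr_ge0 // in h.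
exact: ltW.
Qed.

Lemma min3_bound (a b c x y z : R) : 0 <= x -> 0 <= y -> 0 <= z ->
  - a * x - b * y - c * z <= - Num.min a (Num.min b c) * (x + y + z).
Proof.
move=> x0 y0 z0.
have h1 : Num.min a (Num.min b c) <= a by rewrite ge_min lexx.
have h2 : Num.min a (Num.min b c) <= b by rewrite ge_min ge_min lexx orbT.
have h3 : Num.min a (Num.min b c) <= c by rewrite ge_min ge_min lexx !orbT.
nra.
Qed.

End Misc.
Unset Implicit Arguments. Set Strict Implicit.
Section Frob.
Variable R : realType.
Lemma frobDl m n (A B C : 'M[R]_(m, n)) : frob (A + B) C = frob A C + frob B C.
Proof.
rewrite /frob -big_split /=; apply: eq_bigr => i _; rewrite -big_split /=.
by apply: eq_bigr => j _; rewrite mxE mulrDl.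
Qed.
Lemma frobNl m n (A B : 'M[R]_(m, n)) : frob (- A) B = - frob A B.
Proof.
rewrite /frob -sumrN; apply: eq_bigr => i _; rewrite -sumrN.
by apply: eq_bigr => j _; rewrite mxE mulNr.
Qed.
Lemma frob0l m n (B : 'M[R]_(m, n)) : frob 0 B = 0.
Proof. by rewrite /frob big1 // => i _; rewrite big1 // => j _; rewrite mxE mul0r. Qed.
Lemma le0_eq0 (x : R) : 0 <= x -> x <= 0 -> x = 0.
Proof. by move=> h1 h2; apply/eqP; rewrite eq_le h1 h2. Qed.
Lemma HSnorm_ge0 T dL nV dR (Kk : 'I_T -> 'I_nV -> 'M[R]_(dL, dR)) : 0 <= HSnorm Kk.
Proof. exact: sqrtr_ge0. Qed.
End Frob.
Section DerW.
Variable R : realType.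
Lemma is_derive_addf (f g : R -> R) (t df dg : R) :
  is_derive t (1:R) f df -> is_derive t (1:R) g dg -> is_derive t (1:R) (fun r => f r + g r) (df + dg).
Proof. by move=> h1 h2; exact: is_deriveD. Qed.
Lemma is_derive_mulcf (f : R -> R) (k t df : R) :
  is_derive t (1:R) f df -> is_derive t (1:R) (fun r => k * f r) (k * df).
Proof. by move=> h; exact: (is_deriveZ k h). Qed.
End DerW.
Arguments is_derive_mulcf {R f} k {t df}.
Arguments is_derive_addf {R f g t df dg}.
Lemma fin_ineq (R : realType) (a1 a2 a3 b1 b2 NL NR NP NLd NRd k1 k2 muL muR muP : R) :
 a1 <= - muL * NL -> a2 <= - muR * NR -> a3 <= - muP * NP ->
 b1 <= muL / 2 * NL + k1 * NRd -> b2 <= muR / 2 * NR + k2 * NLd ->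
 2^-1 * (2 * (a1 + b1)) + 2^-1 * (2 * (a2 + b2)) + 2^-1 * (2 * a3)
   + k1 * (NR - NRd) + k2 * (NL - NLd) <=
 - (muL / 2 - k2) * NL - (muR / 2 - k1) * NR - muP * NP.
Proof.
move=> h1 h2 h3 h4 h5.
have e : forall x : R, 2^-1 * (2 * x) = x by move=> x; field.
rewrite !e; nra.
Qed.

Theorem theorem3p6 (R : realType) (T dL nV dR nP : nat)
  (AL : 'M[R]_(T, dL) -> 'M[R]_(T, dL)) (AR : 'M[R]_(nV, dR) -> 'M[R]_(nV, dR))
  (AP : 'cV[R]_nP -> 'cV[R]_nP) (Kk : 'I_T -> 'I_nV -> 'M[R]_(dL, dR))
  (CK muL muR muP tauRL tauLR : R)
  (cL : 'M[R]_(T, dL)) (rL : R) (cR : 'M[R]_(nV, dR)) (rR : R)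
  (cP : 'cV[R]_nP) (rP : R)
  (Hs : 'M[R]_(T, dL)) (Xs : 'M[R]_(nV, dR)) (Ps : 'cV[R]_nP) :
  0 <= tauRL -> 0 <= tauLR ->
  HSnorm Kk <= CK ->
  lipschitz_map AL -> lipschitz_map AR -> lipschitz_map AP ->
  0 < muL -> 0 < muR -> 0 < muP ->
  one_sided_dissipative AL muL -> one_sided_dissipative AR muR ->
  one_sided_dissipative AP muP ->
  0 <= rL -> 0 <= rR -> 0 <= rP ->
  (* S is positively invariant *)
  (forall H X P, is_solution AL AR AP Kk tauRL tauLR H X P ->
     (forall s : R, - Num.max tauRL tauLR <= s <= 0 -> in_balls cL rL cR rR cP rP (H s) (X s) (P s)) ->
     forall t : R, 0 <= t -> in_balls cL rL cR rR cP rP (H t) (X t) (P t)) ->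
  (* (Hs, Xs, Ps) is an equilibrium lying in S *)
  in_balls cL rL cR rR cP rP Hs Xs Ps ->
  AL Hs + Kop Kk Xs = 0 -> AR Xs + Kadj Kk Hs = 0 -> AP Ps = 0 ->
  (* small-gain condition *)
  CK ^+ 2 < muL * muR ->
  let alphaL := muL / 2 - CK ^+ 2 / (2 * muR) in
  let alphaR := muR / 2 - CK ^+ 2 / (2 * muL) in
  let tau := Num.max tauRL tauLR in
  let admissible H X P :=
    is_solution AL AR AP Kk tauRL tauLR H X P /\
    (forall s : R, - tau <= s <= 0 -> in_balls cL rL cR rR cP rP (H s) (X s) (P s)) in
  [/\ (* uniqueness of the equilibrium in S *)
      (forall H X P, in_balls cL rL cR rR cP rP H X P ->
         AL H + Kop Kk X = 0 -> AR X + Kadj Kk H = 0 -> AP P = 0 ->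
         [/\ H = Hs, X = Xs & P = Ps]),
      (* Lyapunov stability *)
      (forall eps, 0 < eps -> exists2 delta, 0 < delta &
         forall H X P, admissible H X P ->
           (forall s : R, - tau <= s <= 0 -> dist3 (H s) Hs (X s) Xs (P s) Ps < delta) ->
           forall t : R, 0 <= t -> dist3 (H t) Hs (X t) Xs (P t) Ps < eps),
      (* global attractivity *)
      (forall H X P, admissible H X P ->
         dist3 (H t) Hs (X t) Xs (P t) Ps @[t --> (+oo : set_system R)] --> 0),
      (* positivity of the decay rates *)
      0 < alphaL /\ 0 < alphaR &
      (* dissipation inequality for the Lyapunov-Krasovskii functional *)
      forall H X P, admissible H X P -> forall t : R, 0 < t ->
        exists2 dV,
          is_derive t (1 : R)
            (fun r => LKfun CK muL muR tauRL tauLR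
               (fun s => H (r + s) - Hs) (fun s => X (r + s) - Xs)
               (fun s => P (r + s) - Ps)) dV &
          dV <= - alphaL * fnorm2 (H t - Hs) - alphaR * fnorm2 (X t - Xs)
                - muP * fnorm2 (P t - Ps)].
Proof.
move=> tRL0 tLR0 hHS lipL lipR lipP muL0 muR0 muP0 dsL dsR dsP rL0 rR0 rP0 inv eqin eqL eqR eqPs sg alphaL alphaR tau adm.
have HSle := HS2_le hHS.
have CK0 : 0 <= CK := le_trans (@HSnorm_ge0 _ _ _ _ _ Kk) hHS.
have aLp : 0 < alphaL.
  rewrite /alphaL subr_gt0 ltr_pdivrMr ?mulr_gt0 //.
  have -> : muL / 2 * (2 * muR) = muL * muR by field.
  exact: sg.
have aRp : 0 < alphaR.
  rewrite /alphaR subr_gt0 ltr_pdivrMr ?mulr_gt0 //.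
  have -> : muR / 2 * (2 * muL) = muL * muR by field.
  exact: sg.
have Y1 : forall x h, frob (Kop Kk x) h <= muL / 2 * fnorm2 h + CK ^+ 2 / (2 * muL) * fnorm2 x.
  move=> x h; apply: le_trans (frob_young _ _ muL0) _.
  have k1 : fnorm2 (Kop Kk x) <= CK ^+ 2 * fnorm2 x.
    exact: le_trans (Kop_bound Kk x) (ler_wpM2r (fnorm2_ge0 _) HSle).
  have i0 : 0 <= (2 * muL)^-1 by rewrite invr_ge0 mulr_ge0 // ltW.
  nra.
have Y2 : forall h x, frob (Kadj Kk h) x <= muR / 2 * fnorm2 x + CK ^+ 2 / (2 * muR) * fnorm2 h.
  move=> h x; apply: le_trans (frob_young _ _ muR0) _.
  have k1 : fnorm2 (Kadj Kk h) <= CK ^+ 2 * fnorm2 h.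
    exact: le_trans (Kadj_bound Kk h) (ler_wpM2r (fnorm2_ge0 _) HSle).
  have i0 : 0 <= (2 * muR)^-1 by rewrite invr_ge0 mulr_ge0 // ltW.
  nra.
have aHs : AL Hs = - Kop Kk Xs by apply/eqP; rewrite -addr_eq0 eqL.
have aXs : AR Xs = - Kadj Kk Hs by apply/eqP; rewrite -addr_eq0 eqR.
have tau1 : tauRL <= tau by rewrite /tau le_max lexx.
have tau2 : tauLR <= tau by rewrite /tau le_max lexx orbT.
have key : forall H X P, adm H X P -> forall t : R, 0 < t -> exists2 dV,
    is_derive t (1 : R)
      (fun r => LKfun CK muL muR tauRL tauLR
         (fun s => H (r + s) - Hs) (fun s => X (r + s) - Xs)
         (fun s => P (r + s) - Ps)) dV &
    dV <= - alphaL * fnorm2 (H t - Hs) - alphaR * fnorm2 (X t - Xs)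
          - muP * fnorm2 (P t - Ps).
  move=> H X P [[cnH cnX cnP hd] hist] t t0.
  have [hdH hdX hdP] := hd t t0.
  have eV : (fun r => LKfun CK muL muR tauRL tauLR
         (fun s => H (r + s) - Hs) (fun s => X (r + s) - Xs)
         (fun s => P (r + s) - Ps)) =
    (fun r => 2^-1 * fnorm2 (H r - Hs) + 2^-1 * fnorm2 (X r - Xs) + 2^-1 * fnorm2 (P r - Ps)
      + CK ^+ 2 / (2 * muL) * \int[lebesgue_measure]_(s in `[- tauRL, 0]) fnorm2 (X (r + s) - Xs)
      + CK ^+ 2 / (2 * muR) * \int[lebesgue_measure]_(s in `[- tauLR, 0]) fnorm2 (H (r + s) - Hs)).
    by rewrite funeqE => r; rewrite /LKfun !addr0.
  rewrite eV.
  have gX := within_fnorm2 (C:=Xs) cnX.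
  have gH := within_fnorm2 (C:=Hs) cnH.
  have iX := int_deriv tRL0 _ gX (t0 := t).
  have iH := int_deriv tLR0 _ gH (t0 := t).
  have lt1 : - tau < t - tauRL by rewrite ltrBrDr; lra.
  have lt2 : - tau < t - tauLR by rewrite ltrBrDr; lra.
  have D := is_derive_addf (is_derive_addf (is_derive_addf (is_derive_addf
     (is_derive_mulcf (2^-1) (is_derive_fnorm2 Hs hdH))
     (is_derive_mulcf (2^-1) (is_derive_fnorm2 Xs hdX)))
     (is_derive_mulcf (2^-1) (is_derive_fnorm2 Ps hdP)))
     (is_derive_mulcf (CK ^+ 2 / (2 * muL)) (iX lt1)))
     (is_derive_mulcf (CK ^+ 2 / (2 * muR)) (iH lt2)).
  eexists; first exact: D.
  have eh : AL (H t) + Kop Kk (X (t - tauRL)) = (AL (H t) - AL Hs) + Kop Kk (X (t - tauRL) - Xs).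
    by rewrite KopB aHs opprK addrACA subrr addr0.
  have ex : AR (X t) + Kadj Kk (H (t - tauLR)) = (AR (X t) - AR Xs) + Kadj Kk (H (t - tauLR) - Hs).
    by rewrite KadjB aXs opprK addrACA subrr addr0.
  have ep : AP (P t) = AP (P t) - AP Ps by rewrite eqPs subr0.
  rewrite eh ex ep (@frobDl _ _ _ (AL (H t) - AL Hs)) (@frobDl _ _ _ (AR (X t) - AR Xs)).
  have d1 := dsL (H t) Hs; have d2 := dsR (X t) Xs; have d3 := dsP (P t) Ps.
  have y1 := Y1 (X (t - tauRL) - Xs) (H t - Hs).
  have y2 := Y2 (H (t - tauLR) - Hs) (X t - Xs).
  exact: fin_ineq d1 d2 d3 y1 y2.
have ntau : forall r : R, 0 <= r -> - tau <= r.
  by move=> r r0; rewrite (le_trans _ r0) // oppr_le0 (le_trans tRL0 tau1).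
set al := Num.min alphaL (Num.min alphaR muP).
have al0 : 0 < al by rewrite /al !lt_min aLp aRp muP0.
have [LL [LL0 hLL]] := lip_sq lipL.
have [LR [LR0 hLR]] := lip_sq lipR.
have [LP [LP0 hLP]] := lip_sq lipP.
set Mb := 4 * rL ^+ 2 + 4 * rR ^+ 2 + 4 * rP ^+ 2.
have Mb0 : 0 <= Mb.
  by rewrite /Mb !addr_ge0 // mulr_ge0 // sqr_ge0.
set Lb := (2 * LL + 2 * LR + LP + 4 * CK ^+ 2 + 3) * Mb + 1.
have Lb0 : 0 < Lb.
  rewrite /Lb; apply: ltr_pwDr; first by [].
  apply: mulr_ge0 => //; rewrite !addr_ge0 // ?mulr_ge0 // ?sqr_ge0 //.
set c1 := CK ^+ 2 / (2 * muL).
set c2 := CK ^+ 2 / (2 * muR).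
have c10 : 0 <= c1 by rewrite /c1 divr_ge0 ?sqr_ge0 // mulr_ge0 // ltW.
have c20 : 0 <= c2 by rewrite /c2 divr_ge0 ?sqr_ge0 // mulr_ge0 // ltW.
have ehg : forall h x, AL h + Kop Kk x = (AL h - AL Hs) + Kop Kk (x - Xs).
  by move=> h x; rewrite KopB aHs opprK addrACA subrr addr0.
have exg : forall x h, AR x + Kadj Kk h = (AR x - AR Xs) + Kadj Kk (h - Hs).
  by move=> x h; rewrite KadjB aXs opprK addrACA subrr addr0.
have epg : forall p, AP p = AP p - AP Ps by move=> p; rewrite eqPs subr0.
have balls : forall H X P, adm H X P -> forall s : R, - tau <= s ->
   [/\ fnorm2 (H s - Hs) <= Mb, fnorm2 (X s - Xs) <= Mb & fnorm2 (P s - Ps) <= Mb].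
  move=> H X P [sol hist] s s0.
  have ib : in_balls cL rL cR rR cP rP (H s) (X s) (P s).
    case: (leP s 0) => s0'; first by apply: hist; rewrite s0 s0'.
    exact: (inv H X P sol hist s (ltW s0')).
  case: ib => b1 b2 b3; case: eqin => e1 e2 e3.
  have q1 := ball_bound b1 e1; have q2 := ball_bound b2 e2; have q3 := ball_bound b3 e3.
  have s1 := sqr_ge0 rL; have s2 := sqr_ge0 rR; have s3 := sqr_ge0 rP.
  rewrite /Mb; split; lra.
have Dder : forall H X P, adm H X P -> forall r : R, 0 < r -> exists2 dD : R,
    is_derive r (1:R) (fun r => fnorm2 (H r - Hs) + fnorm2 (X r - Xs) + fnorm2 (P r - Ps)) dD
    & - Lb <= dD.
  move=> H X P hadm r r0.
  have [bH bX bP] := balls H X P hadm r (ntau r (ltW r0)).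
  have [bHd _ _] := balls H X P hadm (r - tauLR) ltac:(rewrite lerBrDr; lra).
  have [_ bXd _] := balls H X P hadm (r - tauRL) ltac:(rewrite lerBrDr; lra).
  case: hadm => [[cnH cnX cnP hd] hist].
  have [hdH hdX hdP] := hd r r0.
  eexists.
    exact: is_derive_addf (is_derive_addf (is_derive_fnorm2 Hs hdH) (is_derive_fnorm2 Xs hdX))
                          (is_derive_fnorm2 Ps hdP).
  rewrite ehg exg (epg (P r)).
  have f1 := frob_lower (AL (H r) - AL Hs + Kop Kk (X (r - tauRL) - Xs)) (H r - Hs).
  have f2 := frob_lower (AR (X r) - AR Xs + Kadj Kk (H (r - tauLR) - Hs)) (X r - Xs).
  have f3 := frob_lower (AP (P r) - AP Ps) (P r - Ps).
  have g1 := fnorm2D_le (AL (H r) - AL Hs) (Kop Kk (X (r - tauRL) - Xs)).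
  have g2 := fnorm2D_le (AR (X r) - AR Xs) (Kadj Kk (H (r - tauLR) - Hs)).
  have l1 := hLL (H r) Hs; have l2 := hLR (X r) Xs; have l3 := hLP (P r) Ps.
  have k1 : fnorm2 (Kop Kk (X (r - tauRL) - Xs)) <= CK ^+ 2 * Mb.
    exact: le_trans (Kop_bound Kk _) (le_trans (ler_wpM2r (fnorm2_ge0 _) HSle) (ler_wpM2l (sqr_ge0 CK) bXd)).
  have k2 : fnorm2 (Kadj Kk (H (r - tauLR) - Hs)) <= CK ^+ 2 * Mb.
    exact: le_trans (Kadj_bound Kk _) (le_trans (ler_wpM2r (fnorm2_ge0 _) HSle) (ler_wpM2l (sqr_ge0 CK) bHd)).
  have m1 := ler_wpM2l LL0 bH; have m2 := ler_wpM2l LR0 bX; have m3 := ler_wpM2l LP0 bP.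
  rewrite /Lb; lra.
have tau0 : 0 <= tau by exact: le_trans tRL0 tau1.
have HVg : forall H X P, adm H X P -> forall r : R, 0 < r -> exists2 dV : R,
   is_derive r (1:R) (fun r => LKfun CK muL muR tauRL tauLR (fun s => H (r + s) - Hs)
      (fun s => X (r + s) - Xs) (fun s => P (r + s) - Ps)) dV
   & dV <= - al * (fnorm2 (H r - Hs) + fnorm2 (X r - Xs) + fnorm2 (P r - Ps)).
  move=> H X P hadm r r0; have [dV d1 d2] := key H X P hadm r r0.
  exists dV => //; apply: le_trans d2 _; apply: min3_bound; exact: fnorm2_ge0.
have Vexp : forall H X P (r : R), LKfun CK muL muR tauRL tauLR (fun s => H (r + s) - Hs)
      (fun s => X (r + s) - Xs) (fun s => P (r + s) - Ps) =
   2^-1 * (fnorm2 (H r - Hs) + fnorm2 (X r - Xs) + fnorm2 (P r - Ps))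
   + c1 * \int[lebesgue_measure]_(s in `[- tauRL, 0]) fnorm2 (X (r + s) - Xs)
   + c2 * \int[lebesgue_measure]_(s in `[- tauLR, 0]) fnorm2 (H (r + s) - Hs).
  by move=> H X P r; rewrite /LKfun !addr0 !mulrDr.
have Vlow : forall H X P (r : R),
   2^-1 * (fnorm2 (H r - Hs) + fnorm2 (X r - Xs) + fnorm2 (P r - Ps)) <=
   LKfun CK muL muR tauRL tauLR (fun s => H (r + s) - Hs)
      (fun s => X (r + s) - Xs) (fun s => P (r + s) - Ps).
  move=> H X P r; rewrite Vexp.
  have j1 := mulr_ge0 c10 (int_ge0 `[- tauRL, 0] (fun y => fnorm2_ge0 (X (r + y) - Xs))).
  have j2 := mulr_ge0 c20 (int_ge0 `[- tauLR, 0] (fun y => fnorm2_ge0 (H (r + y) - Hs))).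
  lra.
split.
-
  move=> H X P _ eH eX eP.
  have aH : AL H = - Kop Kk X by apply/eqP; rewrite -addr_eq0 eH.
  have aX : AR X = - Kadj Kk H by apply/eqP; rewrite -addr_eq0 eX.
  have d1 := dsL H Hs; have d2 := dsR X Xs; have d3 := dsP P Ps.
  have e1 : AL H - AL Hs = - Kop Kk (X - Xs).
    by rewrite aH aHs KopB opprK opprB; apply: addrC.
  have e2 : AR X - AR Xs = - Kadj Kk (H - Hs).
    by rewrite aX aXs KadjB opprK opprB; apply: addrC.
  rewrite e1 frobNl in d1; rewrite e2 frobNl in d2.
  rewrite eP eqPs subrr frob0l in d3.
  have y1 := Y1 (X - Xs) (H - Hs); have y2 := Y2 (H - Hs) (X - Xs).
  have n1 := fnorm2_ge0 (H - Hs); have n2 := fnorm2_ge0 (X - Xs); have n3 := fnorm2_ge0 (P - Ps).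
  have sum : alphaL * fnorm2 (H - Hs) + alphaR * fnorm2 (X - Xs) <= 0.
    rewrite /alphaL /alphaR; nra.
  have z1 : fnorm2 (H - Hs) = 0 by apply: le0_eq0 => //; nra.
  have z2 : fnorm2 (X - Xs) = 0 by apply: le0_eq0 => //; nra.
  have z3 : fnorm2 (P - Ps) = 0 by apply: le0_eq0 => //; nra.
  by split; apply/eqP; rewrite -subr_eq0; apply/eqP; apply: fnorm2_eq0.
- move=> eps eps0.
  set Cst := 1 + 2 * c1 * tauRL + 2 * c2 * tauLR.
  have Cst1 : 1 <= Cst.
    rewrite /Cst; have := mulr_ge0 c10 tRL0; have := mulr_ge0 c20 tLR0; lra.
  have Cst0 : 0 < Cst by exact: lt_le_trans ltr01 Cst1.
  set dl := eps / Cst.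
  have dl0 : 0 < dl by rewrite /dl divr_gt0.
  have Cdl : Cst * dl ^+ 2 <= eps ^+ 2.
    have -> : Cst * dl ^+ 2 = eps ^+ 2 / Cst by rewrite /dl; field; rewrite gt_eqF.
    by rewrite ler_pdivrMr // ler_peMr // sqr_ge0.
  have dlC : dl ^+ 2 <= Cst * dl ^+ 2 by rewrite ler_peMl // sqr_ge0.
  exists dl => // H X P hadm hist t t0.
  have hadm0 := hadm.
  case: hadm0 => [[cnH cnX cnP hd] hist0].
  set D := fun r => fnorm2 (H r - Hs) + fnorm2 (X r - Xs) + fnorm2 (P r - Ps).
  have D0 : forall r, 0 <= D r by move=> r; rewrite /D !addr_ge0 ?fnorm2_ge0.
  have hD : forall s, - tau <= s <= 0 -> D s < dl ^+ 2.
    by move=> s hs; apply: sqrt_lt_sq (D0 s) dl0 (hist s hs).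
  rewrite /dist3; apply: sq_lt_sqrt; [exact: D0 t | exact: eps0 |].
  change (D t < eps ^+ 2).
  move: t0; rewrite le_eqVlt => /predU1P [<- | tp].
    have := hD 0; rewrite lexx andbT => /(_ (ntau 0 (lexx 0))); lra.
  have cD : {within [set s | - tau <= s], continuous D}.
    apply/subspace_continuousP => x Ax.
    have /subspace_continuousP h1 := within_fnorm2 (C:=Hs) cnH.
    have /subspace_continuousP h2 := within_fnorm2 (C:=Xs) cnX.
    have /subspace_continuousP h3 := within_fnorm2 (C:=Ps) cnP.
    change (((fun r => fnorm2 (H r - Hs)) + (fun r => fnorm2 (X r - Xs)) + (fun r => fnorm2 (P r - Ps)))
       @ within [set s | - tau <= s] (nbhs x) --> D x).
    apply: cvgD; first apply: cvgD.
    + exact: h1 x Ax.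
    + exact: h2 x Ax.
    + exact: h3 x Ax.
  have hD00 : D 0 < dl ^+ 2 by apply: hD; rewrite lexx andbT; exact: ntau.
  have [e e0 he] := cont_ext (ntau 0 (lexx 0)) cD hD00.
  set ep := Num.min (e / 2) (t / 2).
  have ep0 : 0 < ep by rewrite /ep lt_min !divr_gt0.
  have epe : ep < e.
    apply: (@le_lt_trans _ _ (e / 2)); first by rewrite /ep ge_min lexx.
    by rewrite ltr_pdivrMr // ltr_pMr // ltr1n.
  have ept : ep < t.
    apply: (@le_lt_trans _ _ (t / 2)); first by rewrite /ep ge_min lexx orbT.
    by rewrite ltr_pdivrMr // ltr_pMr // ltr1n.
  have hDe : forall s, - tau <= s -> s <= ep -> D s < dl ^+ 2.
    move=> s s1 s2; case: (leP s 0) => s0; first by apply: hD; rewrite s1 s0.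
    by apply: he; [exact: ltW | exact: le_lt_trans s2 epe].
  have HV := HVg H X P hadm.
  have vm := V_mono al0 HV (fun r _ => D0 r) ep0 (ltW ept).
  rewrite !Vexp in vm.
  have i1 : \int[lebesgue_measure]_(s in `[- tauRL, 0]) fnorm2 (X (ep + s) - Xs) <= tauRL * dl ^+ 2.
    apply: (int_bound (a := - tau)) tRL0 _ (within_fnorm2 (C:=Xs) cnX) _.
      by rewrite lerBrDr; lra.
    move=> y y1 y2; have y0 : - tau <= y by apply: le_trans y1; rewrite lerBrDr; lra.
    have := hDe y y0 y2; rewrite /D; have := fnorm2_ge0 (H y - Hs); have := fnorm2_ge0 (P y - Ps); lra.
  have i2 : \int[lebesgue_measure]_(s in `[- tauLR, 0]) fnorm2 (H (ep + s) - Hs) <= tauLR * dl ^+ 2.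
    apply: (int_bound (a := - tau)) tLR0 _ (within_fnorm2 (C:=Hs) cnH) _.
      by rewrite lerBrDr; lra.
    move=> y y1 y2; have y0 : - tau <= y by apply: le_trans y1; rewrite lerBrDr; lra.
    have := hDe y y0 y2; rewrite /D; have := fnorm2_ge0 (X y - Xs); have := fnorm2_ge0 (P y - Ps); lra.
  have j1 := mulr_ge0 c10 (int_ge0 `[- tauRL, 0] (fun y => fnorm2_ge0 (X (t + y) - Xs))).
  have j2 := mulr_ge0 c20 (int_ge0 `[- tauLR, 0] (fun y => fnorm2_ge0 (H (t + y) - Hs))).
  have k1 := ler_wpM2l c10 i1; have k2 := ler_wpM2l c20 i2.
  have hep := hDe ep (ntau ep (ltW ep0)) (lexx ep).
  rewrite /D /= in hep *.
  rewrite /Cst in Cdl.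
  lra.
- move=> H X P hadm.
  have HV := HVg H X P hadm. have HD := Dder H X P hadm.
  have D0 : forall r : R, 0 < r -> 0 <= fnorm2 (H r - Hs) + fnorm2 (X r - Xs) + fnorm2 (P r - Ps).
    by move=> r _; rewrite !addr_ge0 // fnorm2_ge0.
  have V0 : forall r : R, 0 < r -> 0 <= LKfun CK muL muR tauRL tauLR (fun s => H (r + s) - Hs)
      (fun s => X (r + s) - Xs) (fun s => P (r + s) - Ps).
    move=> r r0; apply: le_trans (Vlow H X P r); rewrite mulr_ge0 // ?invr_ge0 //; exact: D0.
  have bb := barbalat al0 Lb0 HV HD D0 V0.
  apply/cvgrPdist_lt => e e0.
  have e20 : 0 < e ^+ 2 by rewrite exprn_gt0.
  apply: filterS (bb _ e20) => t ht.
  rewrite /dist3 sub0r normrN ger0_norm ?sqrtr_ge0 //.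
  by apply: sq_lt_sqrt => //; rewrite !addr_ge0 ?fnorm2_ge0.
- by split.
- move=> H X P hadm t t0. exact: (key H X P hadm t t0).
Qed.
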